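(* Let $T$ be a decision tree of depth $d$ computing $f:\{-1,1\}^n\to\{0,1\}$ with $p=\Pr_x[f(x)=1]$ for uniform $x$. Then $$\sum_{j=1}^n\ \sum_{v:\,\mathrm{next}(v)=j}p_v\cdot|\widehat{A_v}(\{j\})|\ \le\ O\big(\sqrt d\cdot p\cdot\sqrt{\ln(e/p)}\big),$$ with $O(\cdot)$ hiding a universal constant.
   Context: For a vertex $v$ of $T$: $p_v$ is the probability that the computation path of $T$ on a uniformly random input passes through $v$; $A_v:\{-1,1\}^n\to\{0,1\}$ is the function computed by the subtree rooted at $v$; $\mathrm{next}(v)$ is the index of the variable queried at $v$. Fourier coefficients: $\hat g(S)=\mathbb E_x[g(x)\prod_{i\in S}x_i]$ for uniform $x$. *)

(* Defs.v *)
From mathcomp Require Import all_boot all_order all_algebra.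
From mathcomp Require Import all_classical all_reals all_analysis.
Set Implicit Arguments. Unset Strict Implicit. Unset Printing Implicit Defensive.
Import Order.TTheory GRing.Theory Num.Theory.
Local Open Scope ring_scope.

(* Inputs x in {-1,1}^n are encoded as bit tuples: bit b stands for the
   value (-1)^b, i.e. false ~ +1 and true ~ -1. *)
Definition spm (R : ringType) (b : bool) : R := if b then -1 else 1.

(* Decision trees: a leaf outputs a bit (0/1); a node queries variable i
   and goes to the left subtree when x_i = +1 (bit false), right when -1. *)
Inductive dtree := Leaf of bool | Node of nat & dtree & dtree.

Fixpoint depth (T : dtree) : nat :=
  match T with Leaf _ => 0 | Node _ l r => (maxn (depth l) (depth r)).+1 end.

Fixpoint wf_dtree (n : nat) (used : seq nat) (T : dtree) : bool :=
  match T with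
  | Leaf _ => true
  | Node i l r => [&& (i < n)%N, i \notin used,
                     wf_dtree n (i :: used) l & wf_dtree n (i :: used) r]
  end.

Fixpoint dt_eval n (T : dtree) (x : n.-tuple bool) : bool :=
  match T with
  | Leaf b => b
  | Node i l r => if nth false x i then dt_eval r x else dt_eval l x
  end.

(* vertices are addressed by the path (seq of branch bits) from the root *)
Fixpoint subtree (T : dtree) (a : seq bool) : dtree :=
  match a, T with
  | [::], _ => T
  | b :: a', Node _ l r => subtree (if b then r else l) a'
  | _ :: _, Leaf _ => T
  end.

Fixpoint reaches n (T : dtree) (x : n.-tuple bool) (a : seq bool) : bool :=
  match a, T with
  | [::], _ => true
  | b :: a', Node i l r => (nth false x i == b) && reaches (if b then r else l) x a'
  | _ :: _, Leaf _ => false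
  end.

Fixpoint internals (T : dtree) : seq (seq bool) :=
  match T with
  | Leaf _ => [::]
  | Node _ l r => [::] :: map (cons false) (internals l)
                        ++ map (cons true) (internals r)
  end.

(* next(v): index of the variable queried at v (only used for internal v) *)
Definition dt_next (T : dtree) (a : seq bool) : nat :=
  if subtree T a is Node i _ _ then i else 0%N.

Definition Ex (R : realType) n (g : n.-tuple bool -> R) : R :=
  (\sum_(x : n.-tuple bool) g x) / (2 ^+ n)%:R.

Definition pv (R : realType) n (T : dtree) (a : seq bool) : R :=
  Ex (fun x : n.-tuple bool => (reaches T x a)%:R).

Definition Av n (T : dtree) (a : seq bool) (x : n.-tuple bool) : bool :=
  dt_eval (subtree T a) x.

Definition fourier1 (R : realType) n (g : n.-tuple bool -> bool) (j : nat) : R :=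
  Ex (fun x : n.-tuple bool => (g x)%:R * spm R (nth false x j)).

Definition prob1 (R : realType) n (T : dtree) : R :=
  Ex (fun x : n.-tuple bool => (dt_eval T x)%:R).

(* Main.v *)
Require Import Defs.
From mathcomp Require Import all_boot all_order all_algebra.
From mathcomp Require Import all_classical all_reals all_analysis.
From mathcomp Require Import ring lra.
Set Implicit Arguments. Unset Strict Implicit.
Import Order.TTheory GRing.Theory Num.Theory.
Local Open Scope ring_scope.

Section Numeric.
Variable R : realType.

Lemma eqle (x y : R) : x = y -> x <= y. Proof. by move=> ->. Qed.

Lemma ln_le_sub1 (x : R) : 0 < x -> ln x <= x - 1.
Proof.
move=> x0; have h := @le_ln1Dx R (x - 1).
have e : 1 + (x - 1) = x by ring.
rewrite e in h; apply: h; lra.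
Qed.

Lemma ln_diff_le (x y : R) : 0 < x -> 0 < y -> ln y - ln x <= y / x - 1.
Proof.
move=> x0 y0; rewrite -ln_div ?posrE //; apply: ln_le_sub1; exact: divr_gt0.
Qed.

Lemma ln_sqrt (x : R) : 0 < x -> ln x = 2 * ln (Num.sqrt x).
Proof.
move=> x0; rewrite -{1}(@sqr_sqrtr _ x) ?ltW // lnXn ?sqrtr_gt0 //.
by rewrite mulr2n mulr_natl mulr2n.
Qed.

Lemma key_ab (a b mu nu : R) : 0 <= b -> b <= a -> 0 <= mu -> 0 <= nu -> 9 <= mu * nu ->
  (a - b) / 2 <= mu * ((a + b) / 2)
     + nu * ((a * ln a + b * ln b) / 2 - (a + b) / 2 * ln ((a + b) / 2)).
Proof.
move=> b0 ba mu0 nu0 mn.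
set q := (a + b) / 2.
have [q0|qpos] := eqVneq q 0.
  have a0 : a = 0 by rewrite /q in q0; lra.
  have b00 : b = 0 by rewrite /q in q0; lra.
  by rewrite a0 b00 q0 !mul0r !mulr0; lra.
have qgt : 0 < q by rewrite /q; rewrite /q in qpos; lra.
have agt : 0 < a by rewrite /q in qpos; lra.
have aq : q <= a by rewrite /q; lra.
set al := Num.sqrt a; set be := Num.sqrt q.
have alp : 0 < al by rewrite /al sqrtr_gt0.
have bep : 0 < be by rewrite /be sqrtr_gt0.
have al2 : al ^+ 2 = a by rewrite /al sqr_sqrtr ?ltW.
have be2 : be ^+ 2 = q by rewrite /be sqr_sqrtr ?ltW.
have alb : be <= al by rewrite /al /be ler_sqrt // ltW.
have Ha : 2 * al ^+ 2 - 2 * al * be <= a * (ln a - ln q).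
  rewrite (ln_sqrt agt) (ln_sqrt qgt) -/al -/be.
  have h := ln_diff_le alp bep.
  have e : a * (2 * ln al - 2 * ln be) = 2 * al ^+ 2 * (- (ln be - ln al)) by rewrite al2; ring.
  rewrite e.
  have : 2 * al ^+ 2 * (- (be / al - 1)) <= 2 * al ^+ 2 * (- (ln be - ln al)).
    apply: ler_wpM2l; first by rewrite mulr_ge0 // sqr_ge0.
    by rewrite lerN2.
  apply: le_trans; apply: eqle.
  rewrite expr2; field; lra.
have Hb : b - q <= b * (ln b - ln q).
  have [->|bpos] := eqVneq b 0; first by rewrite mul0r; lra.
  have bgt : 0 < b by lra.
  have h := ln_diff_le bgt qgt.
  have h2 : b * (- (q / b - 1)) <= b * (ln b - ln q) by apply: ler_wpM2l; lra.
  apply: le_trans h2; apply: eqle; field; lra.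
have E : (a * ln a + b * ln b) / 2 - q * ln q = (a * (ln a - ln q) + b * (ln b - ln q)) / 2.
  by rewrite /q; field.
rewrite E.
have bval : b = 2 * be ^+ 2 - al ^+ 2 by rewrite al2 be2 /q; field.
have aval : a = al ^+ 2 by [].
have K : (al - be) ^+ 2 / 2 <= (a * (ln a - ln q) + b * (ln b - ln q)) / 2.
  have e2 : (al - be) ^+ 2 = al ^+ 2 - 2 * (al * be) + be ^+ 2 by ring.
  rewrite e2; rewrite -mulrA in Ha; lra.
have al2b : al <= 2 * be.
  rewrite leNgt; apply/negP => H.
  have : 4 * be ^+ 2 < al ^+ 2.
    have e4 : 4 * be ^+ 2 = (2 * be) ^+ 2 by ring.
    rewrite e4; apply: ltrXn2r => //; lra.
  lra.
have st : al ^+ 2 - be ^+ 2 <= 3 * be * (al - be).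
  have e3 : al ^+ 2 - be ^+ 2 = (al + be) * (al - be) by ring.
  rewrite e3; apply: ler_wpM2r; lra.
have mupos : 0 < mu.
  rewrite lt_neqAle mu0 andbT; apply/negP => /eqP H; rewrite -H mul0r in mn; lra.
have am : 3 * be * (al - be) <= mu * be ^+ 2 + nu * ((al - be) ^+ 2 / 2).
  rewrite -(ler_pM2l mupos).
  have sq : 0 <= (mu * be - 3 / 2 * (al - be)) ^+ 2 by apply: sqr_ge0.
  have tt : 0 <= (al - be) ^+ 2 by apply: sqr_ge0.
  have m2 : 9 * (al - be) ^+ 2 <= mu * nu * (al - be) ^+ 2 by apply: ler_wpM2r.
  rewrite -subr_ge0.
  have ex : mu * (mu * be ^+ 2 + nu * ((al - be) ^+ 2 / 2)) - mu * (3 * be * (al - be))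
     = (mu * be - 3 / 2 * (al - be)) ^+ 2 + (mu * nu * (al - be) ^+ 2 - 9 * (al - be) ^+ 2) / 2
       + 9 / 4 * (al - be) ^+ 2 by field.
  rewrite ex; lra.
have nuK : nu * ((al - be) ^+ 2 / 2) <= nu * ((a * (ln a - ln q) + b * (ln b - ln q)) / 2).
  by apply: ler_wpM2l.
have eab : (a - b) / 2 = al ^+ 2 - be ^+ 2 by rewrite al2 be2 /q; field.
have mq : mu * q = mu * be ^+ 2 by rewrite be2.
rewrite eab mq; lra.
Qed.

Lemma key_abs (a b mu nu : R) : 0 <= a -> 0 <= b -> 0 <= mu -> 0 <= nu -> 9 <= mu * nu ->
  `|(a - b) / 2| <= mu * ((a + b) / 2)
     + nu * ((a * ln a + b * ln b) / 2 - (a + b) / 2 * ln ((a + b) / 2)).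
Proof.
move=> a0 b0 mu0 nu0 mn.
have [ba|ab] := leP b a.
  rewrite ger0_norm; first by apply: key_ab.
  apply: divr_ge0; lra.
rewrite ler0_norm; last by apply: mulr_le0_ge0; lra.
have -> : - ((a - b) / 2) = (b - a) / 2 by ring.
rewrite (addrC a b) (addrC (a * ln a)); apply: key_ab => //; lra.
Qed.
End Numeric.

Section Tree.
Variable R : realType.
Variable n : nat.
Implicit Types (x : n.-tuple bool) (T : dtree).

Definition flip (i : nat) x : n.-tuple bool :=
  [tuple (if (j : nat) == i then ~~ tnth x j else tnth x j) | j < n].

Lemma nth_flip i x j : (i < n)%N ->
  nth false (flip i x) j = if j == i then ~~ nth false x j else nth false x j.
Proof.
move=> lin; have [jn|jn] := ltnP j n.
  by rewrite -[j]/(nat_of_ord (Ordinal jn)) -!tnth_nth tnth_mktuple.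
rewrite !nth_default ?size_tuple //.
by case: eqP => // E; move: lin; rewrite -E ltnNge jn.
Qed.

Lemma flipK i : (i < n)%N -> involutive (flip i).
Proof.
move=> lin x; apply: eq_from_tnth => j.
rewrite !(tnth_nth false) !nth_flip //.
by case: eqP => //; rewrite negbK.
Qed.

Lemma sum_half i (b : bool) (g : n.-tuple bool -> R) : (i < n)%N ->
  (forall x, g (flip i x) = g x) ->
  \sum_(x : n.-tuple bool) (nth false x i == b)%:R * g x = (\sum_(x : n.-tuple bool) g x) / 2.
Proof.
move=> lin gi.
set A := \sum_(x : n.-tuple bool) _.
have AB : A + \sum_(x : n.-tuple bool) (nth false x i == ~~ b)%:R * g x = \sum_(x : n.-tuple bool) g x.
  rewrite /A -big_split /=; apply: eq_bigr => x _.
  by case: (nth false x i); case: (b) => /=; rewrite ?mul0r ?mul1r ?add0r ?addr0.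
have AeB : A = \sum_(x : n.-tuple bool) (nth false x i == ~~ b)%:R * g x.
  rewrite /A (reindex_inj (can_inj (flipK lin))) /=.
  apply: eq_bigr => x _; rewrite gi nth_flip // eqxx.
  by case: (nth false x i); case: (b).
rewrite -AB -AeB; field; lra.
Qed.

Lemma Ex_half i (b : bool) (g : n.-tuple bool -> R) : (i < n)%N ->
  (forall x, g (flip i x) = g x) ->
  Ex (fun x => (nth false x i == b)%:R * g x) = Ex g / 2.
Proof. by move=> lin gi; rewrite /Ex sum_half // mulrAC. Qed.

Lemma Ex_const (c : R) : Ex (fun _ : n.-tuple bool => c) = c.
Proof.
rewrite /Ex sumr_const card_tuple card_bool -[c *+ _]mulr_natr.
have -> : (2 ^+ n)%N = (2 ^ n)%N by [].
by rewrite mulfK // pnatr_eq0 expn_eq0.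
Qed.


Lemma eval_flip T used i x : (i < n)%N -> wf_dtree n used T -> i \in used ->
  dt_eval T (flip i x) = dt_eval T x.
Proof.
move=> lin; elim: T used => [b|j l IHl r IHr] used //=.
case/and4P => jn jnu wl wr iu.
have ji : (j == i) = false by apply/eqP => E; move: jnu; rewrite E iu.
rewrite nth_flip // ji.
have iu' : i \in j :: used by rewrite inE iu orbT.
by case: (nth false x j); [apply: IHr wr iu'|apply: IHl wl iu'].
Qed.

Lemma reaches_flip T used i x a : (i < n)%N -> wf_dtree n used T -> i \in used ->
  reaches T (flip i x) a = reaches T x a.
Proof.
move=> lin; elim: T used a => [b|j l IHl r IHr] used [|c a] //=.
case/and4P => jn jnu wl wr iu.
have ji : (j == i) = false by apply/eqP => E; move: jnu; rewrite E iu.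
rewrite nth_flip // ji.
have iu' : i \in j :: used by rewrite inE iu orbT.
by case: c; [rewrite (IHr _ _ wr iu')|rewrite (IHl _ _ wl iu')].
Qed.

Lemma Ex_ext (f g : n.-tuple bool -> R) : (forall x, f x = g x) -> Ex f = Ex g.
Proof. by move=> fg; rewrite /Ex; congr (_ / _); apply: eq_bigr => x _. Qed.

Lemma ExD (f g : n.-tuple bool -> R) : Ex (fun x => f x + g x) = Ex f + Ex g.
Proof. by rewrite /Ex big_split /= mulrDl. Qed.

Lemma ExB (f g : n.-tuple bool -> R) : Ex (fun x => f x - g x) = Ex f - Ex g.
Proof. by rewrite /Ex sumrB mulrBl. Qed.

Lemma Ex_le (f g : n.-tuple bool -> R) : (forall x, f x <= g x) -> Ex f <= Ex g.
Proof.
move=> fg; rewrite /Ex ler_wpM2r // ?invr_ge0 ?ler0n //.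
by apply: ler_sum => x _.
Qed.

Definition mT T : R := Ex (fun x => (dt_eval T x)%:R).

Lemma mT_bounds T : 0 <= mT T <= 1.
Proof.
apply/andP; split.
  rewrite -(Ex_const 0); apply: Ex_le => x; by case: dt_eval.
rewrite -(Ex_const 1); apply: Ex_le => x; by case: dt_eval.
Qed.

Lemma mT_leaf b : mT (Leaf b) = b%:R.
Proof. by rewrite /mT Ex_const. Qed.

Lemma mT_node i l r used : wf_dtree n used (Node i l r) ->
  mT (Node i l r) = (mT l + mT r) / 2.
Proof.
case/and4P => lin iu wl wr.
have iu' : i \in i :: used by rewrite inE eqxx.
rewrite /mT (Ex_ext (g := fun x => (nth false x i == false)%:R * (dt_eval l x)%:R
    + (nth false x i == true)%:R * (dt_eval r x)%:R)); last first.
  by move=> x /=; case: (nth false x i); rewrite /= ?mul0r ?mul1r ?add0r ?addr0.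
rewrite ExD !(Ex_half _ lin); first by rewrite mulrDl.
  by move=> x; rewrite (eval_flip _ lin wr iu').
by move=> x; rewrite (eval_flip _ lin wl iu').
Qed.

Lemma fourier_root i l r used : wf_dtree n used (Node i l r) ->
  @fourier1 R n (@Av n (Node i l r) [::]) i = (mT l - mT r) / 2.
Proof.
case/and4P => lin iu wl wr.
have iu' : i \in i :: used by rewrite inE eqxx.
rewrite /fourier1 /Av /= (Ex_ext (g := fun x => (nth false x i == false)%:R * (dt_eval l x)%:R
    - (nth false x i == true)%:R * (dt_eval r x)%:R)); last first.
  move=> x /=; case: (nth false x i); rewrite /spm /= ?mul0r ?mul1r ?subr0 ?sub0r ?mulrN1 ?mulr1 //.
rewrite ExB !(Ex_half _ lin); first by rewrite /mT mulrBl.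
  by move=> x; rewrite (eval_flip _ lin wr iu').
by move=> x; rewrite (eval_flip _ lin wl iu').
Qed.

Lemma pv_root T : @pv R n T [::] = 1.
Proof.
rewrite /pv (Ex_ext (g := fun _ => 1)) ?Ex_const //.
by move=> x; case: T.
Qed.

Lemma pv_child i l r used (b : bool) v : wf_dtree n used (Node i l r) ->
  @pv R n (Node i l r) (b :: v) = @pv R n (if b then r else l) v / 2.
Proof.
case/and4P => lin iu wl wr.
have iu' : i \in i :: used by rewrite inE eqxx.
rewrite /pv /= (Ex_ext (g := fun x => (nth false x i == b)%:R *
    (reaches (if b then r else l) x v)%:R)); last first.
  by move=> x; case: (_ == _); rewrite /= ?mul0r ?mul1r.
rewrite (Ex_half _ lin) // => x.
by case: (b); rewrite (reaches_flip _ _ lin _ iu').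
Qed.


Definition ST T : R := \sum_(v <- internals T)
   @pv R n T v * `|@fourier1 R n (@Av n T v) (dt_next T v)|.

Lemma ST_node i l r used : wf_dtree n used (Node i l r) ->
  ST (Node i l r) = `|(mT l - mT r) / 2| + (ST l + ST r) / 2.
Proof.
move=> wf.
rewrite {1}/ST /= big_cons big_cat /= !big_map pv_root mul1r.
have -> : dt_next (Node i l r) [::] = i by [].
rewrite (fourier_root wf); congr (_ + _); rewrite mulrDl; congr (_ + _).
  rewrite /ST mulr_suml; apply: eq_bigr => v _.
  by rewrite (pv_child _ _ wf) /= mulrAC.
rewrite /ST mulr_suml; apply: eq_bigr => v _.
by rewrite (pv_child _ _ wf) /= mulrAC.
Qed.

End Tree.

Section Main.
Variable R : realType.

Lemma main_ind n (mu nu : R) : 0 <= mu -> 0 <= nu -> 9 <= mu * nu ->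
  forall T used d, wf_dtree n used T -> (depth T <= d)%N ->
  ST R n T <= mu * d%:R * mT R n T - nu * (mT R n T * ln (mT R n T)).
Proof.
move=> mu0 nu0 mn; elim => [b|i l IHl r IHr] used d wf dep.
  rewrite /ST /= big_nil mT_leaf.
  clear wf dep; case: b; first by rewrite ln1 !mulr0 subr0 mulr1 mulr_ge0.
  by rewrite !mul0r !mulr0 subr0.
case: d dep => [|d] //=; rewrite ltnS geq_max => /andP[dl dr].
have /and4P[lin iu wl wr] := wf.
rewrite (ST_node R wf) (mT_node R wf).
have Hl := IHl _ _ wl dl; have Hr := IHr _ _ wr dr.
have /andP[a0 a1] := mT_bounds R n l; have /andP[b0 b1] := mT_bounds R n r.
move: Hl Hr (key_abs a0 b0 mu0 nu0 mn).
set a := mT R n l; set b := mT R n r.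
set ha := a * ln a; set hb := b * ln b; set hq := (a + b) / 2 * ln ((a + b) / 2).
set D := d%:R.
have -> : (d.+1)%:R = D + 1 :> R by rewrite -addn1 natrD.
have E1 : nu * ((ha + hb) / 2 - hq) = (nu * ha + nu * hb) / 2 - nu * hq by ring.
have E2 : mu * (D + 1) * ((a + b) / 2) = (mu * D * a + mu * D * b) / 2 + mu * ((a + b) / 2) by ring.
rewrite E1 E2 => Hl Hr K.
lra.
Qed.

End Main.

Lemma exch_le (R : realType) n (s : seq (seq bool)) (P : seq bool -> nat)
   (G : seq bool -> nat -> R) : (forall v, 0 <= G v (P v)) ->
  \sum_(j < n) \sum_(v <- s | P v == j) G v j <= \sum_(v <- s) G v (P v).
Proof.
move=> G0; elim: s => [|v s IH].
  by rewrite big_nil big1 // => j _; rewrite big_nil.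
rewrite big_cons.
rewrite (eq_bigr (fun j : 'I_n => (if P v == j then G v j else 0)
          + \sum_(w <- s | P w == j) G w j)); last first.
  by move=> j _; rewrite big_cons; case: (P v == j); rewrite ?add0r.
rewrite big_split /=; apply: lerD => //.
have [pn|pn] := ltnP (P v) n.
  rewrite (bigD1 (Ordinal pn)) //= eqxx big1 ?addr0 // => j jne.
  case: eqP => // E; exfalso; move/eqP: jne; apply; apply: val_inj; by rewrite /= -E.
rewrite big1 // => j _; case: eqP => // E.
by have := ltn_ord j; rewrite -E ltnNge pn.
Qed.

Theorem mainTheorem17 (R : realType) :
  exists C : R, 0 < C /\
  forall (n d : nat) (T : dtree),
    wf_dtree n [::] T -> (depth T <= d)%N ->
    let p : R := @prob1 R n T in
    \sum_(j < n) \sum_(v <- internals T | dt_next T v == j)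
        @pv R n T v * `|@fourier1 R n (@Av n T v) j|
    <= C * Num.sqrt (d%:R) * p * Num.sqrt (ln (expR 1 / p)).
Proof.
exists 6; split; first lra.
move=> n d T wf dep; cbv zeta; set p := prob1 R n T.
apply: (le_trans (@exch_le R n (internals T) (dt_next T)
   (fun v j => @pv R n T v * `|@fourier1 R n (@Av n T v) j|) _)).
  move=> v /=; apply: mulr_ge0 => //.
  rewrite /pv -(@Ex_const R n 0); apply: Ex_le => x; by case: reaches.
change (ST R n T <= 6 * Num.sqrt d%:R * p * Num.sqrt (ln (expR 1 / p))).
have pE : p = mT R n T by [].
have /andP[p0 p1] := mT_bounds R n T; rewrite -pE in p0 p1.
have rhs0 : 0 <= 6 * Num.sqrt (d%:R) * p * Num.sqrt (ln (expR 1 / p)).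
  apply: mulr_ge0; last by rewrite sqrtr_ge0.
  apply: mulr_ge0 => //; try (apply: mulr_ge0; [lra|by rewrite sqrtr_ge0]).
have [pz|ppos] := eqVneq p 0.
  have H : ST R n T <= 3 * d%:R * mT R n T - 3 * (mT R n T * ln (mT R n T)).
    by apply: (@main_ind R n 3 3 _ _ _ T [::] d wf dep); lra.
  rewrite -pE pz !mul0r mulr0 subr0 in H.
  by apply: le_trans H _; rewrite pz !mulr0 mul0r.
have pgt : 0 < p by rewrite lt_neqAle eq_sym ppos p0.
have [d0|dpos] := posnP d.
  have -> : ST R n T = 0.
    by move: dep; rewrite d0; case: (T) => // b _; rewrite /ST big_nil.
  exact: rhs0.
set L := ln (expR 1 / p).
have LE : L = 1 - ln p.
  by rewrite /L ln_div ?posrE ?expR_gt0 // expRK.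
have lnp : ln p <= 0 by apply: ln_le0.
have L1 : 1 <= L by rewrite LE; lra.
set sd := Num.sqrt d%:R; set sL := Num.sqrt L.
have sdp : 0 < sd by rewrite /sd sqrtr_gt0 ltr0n dpos.
have sLp : 0 < sL by rewrite /sL sqrtr_gt0; lra.
have sd2 : sd ^+ 2 = d%:R by rewrite /sd sqr_sqrtr.
have sL2 : sL ^+ 2 = L by rewrite /sL sqr_sqrtr //; lra.
have mn : 9 <= (3 * sL / sd) * (3 * sd / sL).
  apply: eqle; field; apply/andP; split; rewrite gt_eqF //.
have H : ST R n T <= (3 * sL / sd) * d%:R * mT R n T
      - (3 * sd / sL) * (mT R n T * ln (mT R n T)).
  apply: (@main_ind R n _ _ _ _ mn T [::] d wf dep).
  - by rewrite divr_ge0 // ?mulr_ge0 // ltW.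
  - by rewrite divr_ge0 // ?mulr_ge0 // ltW.
rewrite -pE in H.
apply: le_trans H _.
have lnpE : ln p = 1 - sL ^+ 2 by rewrite sL2 LE; ring.
rewrite -sd2 lnpE.
have e : 3 * sL / sd * sd ^+ 2 * p - 3 * sd / sL * (p * (1 - sL ^+ 2))
   = 6 * sd * p * sL - 3 * sd * p / sL.
  field; apply/andP; split; rewrite gt_eqF //.
rewrite e.
have : 0 <= 3 * sd * p / sL.
  apply: divr_ge0; last lra.
  apply: mulr_ge0; last lra.
  apply: mulr_ge0; lra.
lra.
Qed.
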